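(* Let $S=\mathbb{C}[x_{ij}: 1\le i\le 4,\ 1\le j\le 3]$ with the $\mathbb{Z}^3$ column grading, and let $\Delta\in S$ be homogeneous of column degree $(1,1,1)$. Suppose $\Delta=ab+cd$ where $a,c$ are linear forms and $b,d$ are quadratic forms (homogeneous in the standard grading). Then there exist $a',b',c',d'\in S$, each homogeneous in the column grading, with $a',c'$ linear and $b',d'$ quadratic in the standard grading, such that $\Delta=a'b'+c'd'$.
   Context: The column grading is the $\mathbb{Z}^3$-grading with $\deg x_{i1}=(1,0,0)$, $\deg x_{i2}=(0,1,0)$, $\deg x_{i3}=(0,0,1)$ for $1\le i\le 4$ (the variables are the entries of a generic $4\times 3$ matrix, graded by column). *)

(* Defs.v *)
From HB Require Import structures.
From mathcomp Require Import all_boot all_order all_algebra.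
From mathcomp Require Import reals.
From mathcomp Require Import complex.
From mathcomp Require Import mpoly.
Set Implicit Arguments. Unset Strict Implicit. Unset Printing Implicit Defensive.
Import Order.TTheory GRing.Theory Num.Theory.
Local Open Scope ring_scope.

(* The 12 variables are indexed by k : 'I_12, with
   k = 3 * i + j for row i < 4 and column j < 3; so the column of
   variable k is k %% 3. *)
Definition S (R : realType) := {mpoly R[i][12]}.

Definition col_of (k : 'I_12) : nat := k %% 3.

Definition coldeg (m : 'X_{1..12}) (j : 'I_3) : nat :=
  (\sum_(k < 12 | col_of k == j) m k)%N.

(* p is homogeneous of column degree d (the zero polynomial qualifies). *)
Definition colhomog_of (R : realType) (d : 'I_3 -> nat) (p : S R) : Prop :=
  forall m : 'X_{1..12}, m \in msupp p -> forall j : 'I_3, coldeg m j = d j.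

Definition colhomog (R : realType) (p : S R) : Prop :=
  exists d : 'I_3 -> nat, colhomog_of d p.

Definition deg111 : 'I_3 -> nat := fun _ => 1%N.

(* Main.v *)
Require Import Defs.
From HB Require Import structures.
From mathcomp Require Import all_boot all_order all_algebra.
From mathcomp Require Import reals complex mpoly.
From mathcomp Require Import ring zify.
Set Implicit Arguments. Unset Strict Implicit. Unset Printing Implicit Defensive.
Import Order.TTheory GRing.Theory Num.Theory.
Local Open Scope ring_scope.

Section Tensor.
Variable F : numFieldType.

Definition dot (l u : 'I_4 -> F) := \sum_i l i * u i.
Definition Tf (T : 'I_4 -> 'I_4 -> 'I_4 -> F) u v w :=
  \sum_i \sum_j \sum_k T i j k * u i * v j * w k.
Definition lc (u : 'I_4 -> F) s z := fun i => u i + s * z i.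
Definition sc s (u : 'I_4 -> F) := fun i => s * u i.
Definition ev (a : 'I_4) : 'I_4 -> F := fun i => (i == a)%:R.

Lemma dotC l u : dot l u = dot u l.
Proof. by apply: eq_bigr => i _; rewrite mulrC. Qed.

Lemma dot_lc l u s z : dot l (lc u s z) = dot l u + s * dot l z.
Proof.
rewrite /dot mulr_sumr -big_split; apply: eq_bigr => i _ /=; rewrite /lc; ring.
Qed.

Lemma dot_lcl l s l2 u : dot (lc l s l2) u = dot l u + s * dot l2 u.
Proof. by rewrite dotC dot_lc !(dotC u). Qed.

Lemma dot_sc l s u : dot l (sc s u) = s * dot l u.
Proof. rewrite /dot mulr_sumr; apply: eq_bigr => i _; rewrite /sc; ring. Qed.

Lemma sum_ev (G : 'I_4 -> F) a : \sum_j G j * ev a j = G a.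
Proof.
rewrite (bigD1 a) //= big1 => [|j /negbTE hj]; first by rewrite /ev eqxx mulr1 addr0.
by rewrite /ev hj mulr0.
Qed.

Lemma dot_ev l a : dot l (ev a) = l a.
Proof. exact: sum_ev. Qed.

Lemma dot0 l u : (forall i, l i = 0) -> dot l u = 0.
Proof. by move=> h; rewrite /dot big1 // => i _; rewrite h mul0r. Qed.

Lemma Tf_lc1 T u s z v w : Tf T (lc u s z) v w = Tf T u v w + s * Tf T z v w.
Proof.
rewrite /Tf mulr_sumr -big_split; apply: eq_bigr => i _ /=.
rewrite mulr_sumr -big_split; apply: eq_bigr => j _ /=.
rewrite mulr_sumr -big_split; apply: eq_bigr => k _ /=; rewrite /lc; ring.
Qed.

Lemma Tf_lc2 T u s z v w : Tf T u (lc v s z) w = Tf T u v w + s * Tf T u z w.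
Proof.
rewrite /Tf mulr_sumr -big_split; apply: eq_bigr => i _ /=.
rewrite mulr_sumr -big_split; apply: eq_bigr => j _ /=.
rewrite mulr_sumr -big_split; apply: eq_bigr => k _ /=; rewrite /lc; ring.
Qed.

Lemma Tf_sc1 T s u v w : Tf T (sc s u) v w = s * Tf T u v w.
Proof.
rewrite /Tf mulr_sumr; apply: eq_bigr => i _ /=.
rewrite mulr_sumr; apply: eq_bigr => j _ /=.
rewrite mulr_sumr; apply: eq_bigr => k _ /=; rewrite /sc; ring.
Qed.

Lemma Tf_sc2 T s u v w : Tf T u (sc s v) w = s * Tf T u v w.
Proof.
rewrite /Tf mulr_sumr; apply: eq_bigr => i _ /=.
rewrite mulr_sumr; apply: eq_bigr => j _ /=.
rewrite mulr_sumr; apply: eq_bigr => k _ /=; rewrite /sc; ring.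
Qed.

Lemma Tf_sc3 T s u v w : Tf T u v (sc s w) = s * Tf T u v w.
Proof.
rewrite /Tf mulr_sumr; apply: eq_bigr => i _ /=.
rewrite mulr_sumr; apply: eq_bigr => j _ /=.
rewrite mulr_sumr; apply: eq_bigr => k _ /=; rewrite /sc; ring.
Qed.

Lemma Tf_ev23 T u j k : Tf T u (ev j) (ev k) = dot (fun i => T i j k) u.
Proof.
apply: eq_bigr => i _.
rewrite (eq_bigr (fun j0 => (T i j0 k * u i) * ev j j0)); first by rewrite sum_ev mulrC.
by move=> j0 _; rewrite (eq_bigr (fun k0 => (T i j0 k0 * u i * ev j j0) * ev k k0)) ?sum_ev.
Qed.

Lemma Tf_ev13 T v i k : Tf T (ev i) v (ev k) = dot (fun j => T i j k) v.
Proof.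
rewrite /Tf (eq_bigr (fun i0 => (\sum_j T i0 j k * v j) * ev i i0)).
  rewrite sum_ev; apply: eq_bigr => j _; by rewrite mulrC.
move=> i0 _; rewrite mulr_suml; apply: eq_bigr => j _.
rewrite (eq_bigr (fun k0 => (T i0 j k0 * ev i i0 * v j) * ev k k0)) ?sum_ev //; first ring.
Qed.

Lemma Tf_ev T i j k : Tf T (ev i) (ev j) (ev k) = T i j k.
Proof. by rewrite Tf_ev23 dot_ev. Qed.

Definition rot (T : 'I_4 -> 'I_4 -> 'I_4 -> F) := fun x y z => T z x y.

Lemma Tf_rot T u v w : Tf (rot T) v w u = Tf T u v w.
Proof.
rewrite /Tf /rot.
rewrite (eq_bigr (fun x => \sum_z \sum_y T z x y * v x * w y * u z)); last first.
  by move=> x _; rewrite exchange_big.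
rewrite exchange_big; apply: eq_bigr => z _; apply: eq_bigr => x _; apply: eq_bigr => y _.
ring.
Qed.

End Tensor.
Arguments ev {F} a i.

Section Tensor2.
Variable F : numFieldType.
Implicit Types l u v w x phi : 'I_4 -> F.

Lemma L1 l phi : (forall x, dot l x = 0 -> dot phi x = 0) ->
  exists c : F, forall i, phi i = c * l i.
Proof.
move=> H; case: (pickP (fun a => l a != 0)) => [a la|l0].
  exists (phi a / l a) => i.
  have := H (lc (ev i) (- (l i / l a)) (ev a)).
  rewrite !dot_lc !dot_ev mulNr divfK // subrr => /(_ erefl) h.
  have -> : phi i = phi i + - (l i / l a) * phi a + (l i / l a) * phi a by ring.
  rewrite h; field. exact: la.
exists 0 => i; rewrite mul0r -(dot_ev phi i); apply: H.
by apply: dot0 => j; move: (l0 j) => /= /negbFE /eqP.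
Qed.

Lemma L2 l l' phi : (forall x, dot l x = 0 -> dot l' x = 0 -> dot phi x = 0) ->
  exists c : F * F, forall i, phi i = c.1 * l i + c.2 * l' i.
Proof.
move=> H; case: (pickP (fun a => l a != 0)) => [a la|l0].
  pose phi1 := lc phi (- (phi a / l a)) l.
  pose l1 := lc l' (- (l' a / l a)) l.
  have H1 : forall x, dot l1 x = 0 -> dot phi1 x = 0.
    move=> x hx.
    have := H (lc x (- (dot l x / l a)) (ev a)).
    rewrite !dot_lc !dot_ev mulNr divfK // subrr => /(_ erefl).
    rewrite /phi1 dot_lcl.
    have -> : dot l' x + - (dot l x / l a) * l' a = 0.
      by rewrite -hx /l1 dot_lcl; field.
    move=> /(_ erefl) h; rewrite -h; field; done.
  have [c hc] := L1 H1.
  exists (phi a / l a - c * (l' a / l a), c) => i /=.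
  have := hc i; rewrite /phi1 /l1 /lc => h.
  have -> : phi i = (phi i + - (phi a / l a) * l i) + (phi a / l a) * l i by ring.
  rewrite h; ring.
have l00 : forall x, dot l x = 0.
  by move=> x; apply: dot0 => j; move: (l0 j) => /= /negbFE /eqP.
have [c hc] := L1 (fun x => H x (l00 x)).
by exists (0, c) => i /=; rewrite hc mul0r add0r.
Qed.

Definition slot (p : nat) (f : 'I_4 -> F) (g : 'I_4 -> 'I_4 -> F) i j k :=
  match p with 0 => f i * g j k | 1 => f j * g i k | _ => f k * g i j end.

Definition Dec (T : 'I_4 -> 'I_4 -> 'I_4 -> F) :=
  exists (p q : nat) f g f' g', [/\ (p < 3)%N, (q < 3)%N & forall i j k,
    T i j k = slot p f g i j k + slot q f' g' i j k].

Lemma K1_0 T l l' : (forall u v w, dot l u = 0 -> dot l' u = 0 -> Tf T u v w = 0) ->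
  Dec T.
Proof.
move=> H.
have: forall jk : 'I_4 * 'I_4, exists c : F * F, forall i,
   T i jk.1 jk.2 = c.1 * l i + c.2 * l' i.
  move=> [j k]; apply: L2 => x hx hx'; rewrite -Tf_ev23; exact: H.
case/fin_all_exists => G hG.
exists 0, 0, l, (fun j k => (G (j, k)).1), l', (fun j k => (G (j, k)).2).
split=> // i j k /=; rewrite (hG (j, k)); ring.
Qed.

Lemma K2_01 T l l' : (forall u v w, dot l u = 0 -> dot l' v = 0 -> Tf T u v w = 0) ->
  Dec T.
Proof.
move=> H; case: (pickP (fun a => l a != 0)) => [a la|l0]; last first.
  have l00 : forall x, dot l x = 0.
    by move=> x; apply: dot0 => j; move: (l0 j) => /= /negbFE /eqP.
  have: forall ik : 'I_4 * 'I_4, exists c : F, forall j,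
     T ik.1 j ik.2 = c * l' j.
    move=> [i k]; apply: L1 => x hx; rewrite -Tf_ev13; exact: H.
  case/fin_all_exists => G hG.
  exists 0, 1, l, (fun _ _ => 0), l', (fun i k => G (i, k)).
  split=> // i j k /=; rewrite (hG (i, k)); ring.
pose g j k := T a j k / l a.
have: forall ik : 'I_4 * 'I_4, exists c : F, forall j,
   T ik.1 j ik.2 - l ik.1 * g j ik.2 = c * l' j.
  move=> [i k]; apply: L1 => v hv /=.
  have [c hc] : exists c : F, forall i0, dot (fun j => T i0 j k) v = c * l i0.
    apply: L1 => u hu.
    have <- : Tf T u v (ev k) = dot (fun i0 => dot (fun j => T i0 j k) v) u.
      rewrite /Tf /dot; apply: eq_bigr => i0 _.
      rewrite mulr_suml; apply: eq_bigr => j _.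
      rewrite (eq_bigr (fun k0 => (T i0 j k0 * u i0 * v j) * ev k k0)) ?sum_ev //; first ring.
    exact: H.
  have ha := hc a; have hi := hc i.
  rewrite /dot in ha hi.
  rewrite /dot (eq_bigr (fun j => T i j k * v j - l i / l a * (T a j k * v j))); last first.
    by move=> j _; rewrite /g; field.
  rewrite sumrB -mulr_sumr hi ha; field. exact: la.
case/fin_all_exists => G hG.
exists 0, 1, l, g, l', (fun i k => G (i, k)).
split=> // i j k /=; move: (hG (i, k) j) => /= h; rewrite -[T i j k](subrK (l i * g j k)) h; ring.
Qed.

End Tensor2.

Section Tensor3.
Variable F : numFieldType.
Local Notation vec := ('I_4 -> F).

Definition Hyp (T : 'I_4 -> 'I_4 -> 'I_4 -> F) (x0 x1 x2 y0 y1 y2 : vec) := forall u v w,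
  dot x0 u + dot x1 v + dot x2 w = 0 -> dot y0 u + dot y1 v + dot y2 w = 0 ->
  Tf T u v w = 0.

Lemma two_pts (X Y : F) : X + Y = 0 -> X + 2 * Y = 0 -> X = 0.
Proof.
move=> h1 h2; have -> : X = 2 * (X + Y) - (X + 2 * Y) by ring.
by rewrite h1 h2 mulr0 subr0.
Qed.

Lemma two_neq0 : (2 : F) != 0.
Proof. by rewrite pnatr_eq0. Qed.

Lemma pt1 (T : 'I_4 -> 'I_4 -> 'I_4 -> F) u v w z : (forall s : F, s != 0 -> Tf T (lc u s z) (sc s v) (sc s w) = 0) ->
  Tf T u v w = 0.
Proof.
move=> H; apply: (@two_pts _ (Tf T z v w)).
  have := H 1 (oner_neq0 _); rewrite Tf_sc3 Tf_sc2 Tf_lc1 !mul1r //.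
have := H 2 two_neq0; rewrite Tf_sc3 Tf_sc2 Tf_lc1 => /eqP.
by rewrite !mulf_eq0 (negbTE two_neq0) /= => /eqP.
Qed.

Lemma pt2 (T : 'I_4 -> 'I_4 -> 'I_4 -> F) u v w z : (forall s : F, s != 0 -> Tf T u (lc v s z) (sc s w) = 0) ->
  Tf T u v w = 0.
Proof.
move=> H; apply: (@two_pts _ (Tf T u z w)).
  have := H 1 (oner_neq0 _); rewrite Tf_sc3 Tf_lc2 !mul1r //.
have := H 2 two_neq0; rewrite Tf_sc3 Tf_lc2 => /eqP.
by rewrite !mulf_eq0 (negbTE two_neq0) /= => /eqP.
Qed.

Lemma E0 (T : 'I_4 -> 'I_4 -> 'I_4 -> F) x0 x1 x2 y0 y1 y2 a b : Hyp T x0 x1 x2 y0 y1 y2 ->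
  x0 a != 0 -> y0 a = 0 -> y0 b != 0 ->
  forall u v w, dot x0 u = 0 -> dot y0 u = 0 -> Tf T u v w = 0.
Proof.
move=> H xa ya yb u v w hu1 hu2.
pose t1 := - (dot x1 v + dot x2 w); pose t2 := - (dot y1 v + dot y2 w).
pose be := t2 / y0 b; pose al := (t1 - be * x0 b) / x0 a.
pose z := lc (sc al (ev a)) be (ev b).
have hz1 : dot x0 z = t1.
  rewrite /z dot_lc dot_sc !dot_ev /al; field; exact: xa.
have hz2 : dot y0 z = t2.
  rewrite /z dot_lc dot_sc !dot_ev ya /be; field; exact: yb.
apply: (@pt1 _ _ _ _ z) => s s0; apply: H.
  by rewrite dot_lc !dot_sc hu1 hz1 /t1; ring.
by rewrite dot_lc !dot_sc hu2 hz2 /t2; ring.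
Qed.

Lemma D01 (T : 'I_4 -> 'I_4 -> 'I_4 -> F) x0 x1 x2 y0 y1 y2 a : Hyp T x0 x1 x2 y0 y1 y2 ->
  x0 a != 0 -> (forall i, y0 i = 0) ->
  forall u v w, dot x0 u = 0 -> dot y1 v + dot y2 w = 0 -> Tf T u v w = 0.
Proof.
move=> H xa hy0 u v w hu hvw.
pose z := sc (- (dot x1 v + dot x2 w) / x0 a) (ev a).
have hz : dot x0 z = - (dot x1 v + dot x2 w).
  rewrite /z dot_sc dot_ev; field; exact: xa.
apply: (@pt1 _ _ _ _ z) => s s0; apply: H.
  by rewrite dot_lc hz !dot_sc hu; ring.
by rewrite (dot0 (lc u s z) hy0) add0r !dot_sc -mulrDr hvw mulr0.
Qed.

Lemma D12 (T : 'I_4 -> 'I_4 -> 'I_4 -> F) x0 y1 y2 b :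
  (forall u v w, dot x0 u = 0 -> dot y1 v + dot y2 w = 0 -> Tf T u v w = 0) ->
  y1 b != 0 ->
  forall u v w, dot x0 u = 0 -> dot y1 v = 0 -> Tf T u v w = 0.
Proof.
move=> H yb u v w hu hv.
pose z := sc (- dot y2 w / y1 b) (ev b).
have hz : dot y1 z = - dot y2 w.
  rewrite /z dot_sc dot_ev; field; exact: yb.
apply: (@pt2 _ _ _ _ z) => s s0; apply: H => //.
by rewrite dot_lc hz !dot_sc hv; ring.
Qed.

Lemma slot_rot p (f : 'I_4 -> F) g : (p < 3)%N -> exists p' g', (p' < 3)%N /\
  forall i j k, slot p f g j k i = slot p' f g' i j k.
Proof.
case: p => [|[|[|p]]] // _.
- by exists 1%N, (fun i k => g k i).
- by exists 2%N, (fun i j => g j i).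
- by exists 0%N, g.
Qed.

Lemma Dec_rot (T : 'I_4 -> 'I_4 -> 'I_4 -> F) : Dec (rot T) -> Dec T.
Proof.
case=> p [q [f [g [f' [g' [hp hq H]]]]]].
have [p1 [g1 [hp1 H1]]] := slot_rot f g hp.
have [q1 [g2 [hq1 H2]]] := slot_rot f' g' hq.
exists p1, q1, f, g1, f', g2; split=> // i j k.
by rewrite -H1 -H2 -H.
Qed.

Lemma K2_02 (T : 'I_4 -> 'I_4 -> 'I_4 -> F) l l' : (forall u v w, dot l u = 0 -> dot l' w = 0 -> Tf T u v w = 0) ->
  Dec T.
Proof.
move=> H; apply: Dec_rot; apply: Dec_rot.
apply: (@K2_01 _ _ l' l) => A B C hA hB.
rewrite Tf_rot Tf_rot; exact: H.
Qed.

Lemma Hyp_rot (T : 'I_4 -> 'I_4 -> 'I_4 -> F) x0 x1 x2 y0 y1 y2 : Hyp T x0 x1 x2 y0 y1 y2 ->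
  Hyp (rot T) x1 x2 x0 y1 y2 y0.
Proof.
move=> H u v w h1 h2; rewrite Tf_rot; apply: H.
  by rewrite -h1; ring.
by rewrite -h2; ring.
Qed.

Lemma Hyp_swap (T : 'I_4 -> 'I_4 -> 'I_4 -> F) x0 x1 x2 y0 y1 y2 : Hyp T x0 x1 x2 y0 y1 y2 ->
  Hyp T y0 y1 y2 x0 x1 x2.
Proof. by move=> H u v w h1 h2; apply: H. Qed.

Lemma nopick (x : 'I_4 -> F) : (forall a, (fun a => x a != 0) a = false) -> forall i, x i = 0.
Proof. by move=> h i; move: (h i) => /= /negbFE /eqP. Qed.

Lemma M0 (T : 'I_4 -> 'I_4 -> 'I_4 -> F) x0 x1 x2 y0 y1 y2 a : Hyp T x0 x1 x2 y0 y1 y2 -> x0 a != 0 -> Dec T.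
Proof.
move=> H xa.
pose c := y0 a / x0 a.
pose y0' := lc y0 (- c) x0; pose y1' := lc y1 (- c) x1; pose y2' := lc y2 (- c) x2.
have H' : Hyp T x0 x1 x2 y0' y1' y2'.
  move=> u v w h1 h2; apply: H => //.
  move: h2; rewrite !dot_lcl => h2.
  have -> : dot y0 u + dot y1 v + dot y2 w =
    (dot y0 u + - c * dot x0 u + (dot y1 v + - c * dot x1 v) + (dot y2 w + - c * dot x2 w))
    + c * (dot x0 u + dot x1 v + dot x2 w) by ring.
  by rewrite h2 h1 mulr0 addr0.
have ya : y0' a = 0 by rewrite /y0' /lc /c; field; exact: xa.
case: (pickP (fun b => y0' b != 0)) => [b yb|y0n].
  apply: (@K1_0 _ _ x0 y0') => u v w; exact: (E0 H' xa ya yb).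
have P := D01 H' xa (nopick y0n).
case: (pickP (fun b => y1' b != 0)) => [b yb|y1n].
  apply: (@K2_01 _ _ x0 y1') => u v w; exact: (D12 P yb).
apply: (@K2_02 _ x0 y2') => u v w hu hw; apply: P => //.
by rewrite (dot0 v (nopick y1n)) hw addr0.
Qed.

Lemma M1 (T : 'I_4 -> 'I_4 -> 'I_4 -> F) x0 x1 x2 y0 y1 y2 : Hyp T x0 x1 x2 y0 y1 y2 ->
  (forall i, x0 i = 0 /\ y0 i = 0) \/ Dec T.
Proof.
move=> H; case: (pickP (fun b => x0 b != 0)) => [b xb|x0n].
  by right; exact: (M0 H xb).
case: (pickP (fun b => y0 b != 0)) => [b yb|y0n].
  by right; exact: (M0 (Hyp_swap H) yb).
by left=> i; rewrite (nopick x0n) (nopick y0n).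
Qed.

Lemma tensor_main (T : 'I_4 -> 'I_4 -> 'I_4 -> F) x0 x1 x2 y0 y1 y2 : Hyp T x0 x1 x2 y0 y1 y2 -> Dec T.
Proof.
move=> H; case: (M1 H) => // /all_and2 [hx0 hy0].
have H1 := Hyp_rot H; case: (M1 H1) => [/all_and2 [hx1 hy1]|]; last exact: Dec_rot.
have H2 := Hyp_rot H1; case: (M1 H2) => [/all_and2 [hx2 hy2]|]; last by move=> /Dec_rot /Dec_rot.
have T0 : forall i j k, T i j k = 0.
  move=> i j k; rewrite -Tf_ev; apply: H.
    by rewrite (dot0 (ev i) hx0) (dot0 (ev j) hx1) (dot0 (ev k) hx2) !addr0.
  by rewrite (dot0 (ev i) hy0) (dot0 (ev j) hy1) (dot0 (ev k) hy2) !addr0.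
exists 0%N, 0%N, (fun _ => 0), (fun _ _ => 0), (fun _ => 0), (fun _ _ => 0).
by split=> // i j k /=; rewrite T0 mul0r addr0.
Qed.

End Tensor3.

Definition idx (i : 'I_4) (p : nat) : 'I_12 := inord (3 * i + p).

Lemma val_idx i p : (p < 3)%N -> (idx i p : nat) = (3 * i + p)%N.
Proof. move=> hp; rewrite /idx inordK //; have := ltn_ord i; lia. Qed.

Lemma col_idx i p : (p < 3)%N -> col_of (idx i p) = p.
Proof. by move=> hp; rewrite /col_of val_idx // mulnC modnMDl modn_small. Qed.

Lemma idx_inj i j p q : (p < 3)%N -> (q < 3)%N -> (idx i p == idx j q) = (i == j) && (p == q).
Proof.
move=> hp hq; apply/eqP/andP => [h|[/eqP -> /eqP -> //]].
have := congr1 (@nat_of_ord 12) h; rewrite !val_idx // => e.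
have hpq : p = q.
  have := congr1 (modn^~ 3) e; rewrite /= ![(3 * _)%N]mulnC !modnMDl !modn_small //.
split; apply/eqP => //; apply: ord_inj; move: e; rewrite hpq; lia.
Qed.

Definition mono (i j k : 'I_4) : 'X_{1..12} :=
  (U_(idx i 0) + U_(idx j 1) + U_(idx k 2))%MM.

Lemma coldegD m1 m2 c : coldeg (m1 + m2)%MM c = (coldeg m1 c + coldeg m2 c)%N.
Proof. by rewrite /coldeg -big_split; apply: eq_bigr => k _; rewrite mnmDE. Qed.

Lemma coldegU k c : coldeg U_(k)%MM c = (col_of k == c).
Proof.
rewrite /coldeg; case: eqP => hk.
  rewrite (bigD1 k) ?hk ?eqxx //= mnm1E eqxx big1 // => k' /andP [_ hk'].
  by rewrite mnm1E eq_sym (negbTE hk').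
rewrite big1 // => k' /eqP hk'; rewrite mnm1E; case: eqP => // e.
by rewrite e in hk.
Qed.

Section Poly.
Variable R : realType.
Local Notation F := (R[i]).
Local Notation SS := (S R).

Definition PolyT (T : 'I_4 -> 'I_4 -> 'I_4 -> F) : SS :=
  \sum_i \sum_j \sum_k T i j k *: 'X_[mono i j k].

Definition o1 (p : nat) := if p == 0%N then 1%N else 0%N.
Definition o2 (p : nat) := if p == 2%N then 1%N else 2%N.

Definition lin (p : nat) (f : 'I_4 -> F) : SS := \sum_i f i *: 'X_[U_(idx i p)].
Definition quad (p : nat) (g : 'I_4 -> 'I_4 -> F) : SS :=
  \sum_i \sum_j g i j *: 'X_[U_(idx i (o1 p)) + U_(idx j (o2 p))].

Lemma prodZX (c d : F) m1 m2 :
  (c *: 'X_[m1]) * (d *: 'X_[m2]) = (c * d) *: ('X_[(m1 + m2)%MM] : SS).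
Proof. by rewrite -scalerAl -scalerAr scalerA mpolyXD. Qed.

Lemma expand3 (A : 'I_4 -> SS) (B : 'I_4 -> 'I_4 -> SS) :
  (\sum_i A i) * (\sum_j \sum_k B j k) = \sum_i \sum_j \sum_k A i * B j k.
Proof.
rewrite mulr_suml; apply: eq_bigr => i _; rewrite mulr_sumr; apply: eq_bigr => j _.
by rewrite mulr_sumr.
Qed.

Lemma lin_quad p f g : (p < 3)%N -> lin p f * quad p g = PolyT (slot p f g).
Proof.
case: p => [|[|[|p]]] // _; rewrite /lin /quad /PolyT /o1 /o2 /= expand3.
- apply: eq_bigr => i _; apply: eq_bigr => j _.
  apply: eq_bigr => k _; rewrite prodZX /mono addmA //.
- rewrite exchange_big; apply: eq_bigr => i _; apply: eq_bigr => j _.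
  apply: eq_bigr => k _; rewrite prodZX /mono; congr (_ *: 'X_[_]).
  by apply/mnmP => x; rewrite !mnmDE; lia.
- rewrite exchange_big; apply: eq_bigr => i _.
  rewrite exchange_big; apply: eq_bigr => j _; apply: eq_bigr => k _.
  rewrite prodZX /mono; congr (_ *: 'X_[_]).
  by apply/mnmP => x; rewrite !mnmDE; lia.
Qed.

Lemma PolyT_ext T T' : (forall i j k, T i j k = T' i j k) -> PolyT T = PolyT T'.
Proof.
move=> h; apply: eq_bigr => i _; apply: eq_bigr => j _; apply: eq_bigr => k _.
by rewrite h.
Qed.

Lemma PolyT_add T T' : PolyT (fun i j k => T i j k + T' i j k) = PolyT T + PolyT T'.
Proof.
rewrite /PolyT -big_split; apply: eq_bigr => i _; rewrite -big_split.
apply: eq_bigr => j _; rewrite -big_split; apply: eq_bigr => k _.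
by rewrite scalerDl.
Qed.

Lemma msupp_sumP (I : finType) (G : I -> SS) (P : 'X_{1..12} -> Prop) :
  (forall x m, m \in msupp (G x) -> P m) -> forall m, m \in msupp (\sum_x G x) -> P m.
Proof.
move=> h m /msupp_sum_le /flattenP [s /mapP [x _ ->]]; exact: h.
Qed.

Lemma msuppZXP (c : F) m0 (P : 'X_{1..12} -> Prop) :
  P m0 -> forall m, m \in msupp (c *: ('X_[m0] : SS)) -> P m.
Proof.
by move=> h m /msuppZ_le; rewrite msuppX inE => /eqP ->.
Qed.

Lemma lin_colhomog p f : (p < 3)%N -> colhomog (lin p f).
Proof.
move=> hp; exists (fun c : 'I_3 => nat_of_bool (p == c)).
apply: msupp_sumP => i; apply: msuppZXP => c.
by rewrite coldegU col_idx.
Qed.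

Lemma lin_homog p f : lin p f \is 1.-homog.
Proof.
apply/dhomogP; apply: (msupp_sumP (P := fun m => mdeg m = 1%N)) => i.
apply: msuppZXP; exact: mdeg1.
Qed.

Lemma o12 p : (o1 p < 3)%N /\ (o2 p < 3)%N.
Proof. by rewrite /o1 /o2; case: eqP; case: eqP. Qed.

Lemma quad_colhomog p g : colhomog (quad p g).
Proof.
have [h1 h2] := o12 p.
exists (fun c : 'I_3 => (nat_of_bool (o1 p == c) + nat_of_bool (o2 p == c))%N).
apply: msupp_sumP => i; apply: msupp_sumP => j; apply: msuppZXP => c.
by rewrite coldegD !coldegU !col_idx.
Qed.

Lemma quad_homog p g : quad p g \is 2.-homog.
Proof.
apply/dhomogP; apply: (msupp_sumP (P := fun m => mdeg m = 2%N)) => i.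
apply: msupp_sumP => j; apply: msuppZXP.
by rewrite mdegD !mdeg1.
Qed.

End Poly.

Lemma sum_delta (R0 : nzRingType) n (G : 'I_n -> R0) a :
  \sum_i G i * (i == a)%:R = G a.
Proof.
rewrite (bigD1 a) //= big1 => [|j /negbTE hj]; first by rewrite eqxx mulr1 addr0.
by rewrite hj mulr0.
Qed.

Lemma idx_neq j p (x : 'I_12) : (p < 3)%N -> col_of x != p -> (idx j p == x) = false.
Proof.
move=> hp hx; apply/negbTE; apply: contra hx => /eqP <-; by rewrite col_idx.
Qed.

Lemma col_lt (x : 'I_12) : (col_of x < 3)%N.
Proof. by rewrite /col_of ltn_mod. Qed.

Lemma col1 (m : 'X_{1..12}) (c : 'I_3) : coldeg m c = 1%N ->
  exists i : 'I_4, m (idx i c) = 1%N /\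
    forall x : 'I_12, col_of x = c -> x != idx i c -> m x = 0%N.
Proof.
rewrite /coldeg => hs.
case: (pickP (fun k : 'I_12 => (col_of k == c) && (m k != 0%N))) => [k0 /andP [hc hk]|h0];
  last first.
  move: hs; rewrite big1 // => k hk; move: (h0 k); rewrite hk /= => /negbFE /eqP //.
move: hs; rewrite (bigD1 k0) //= => hs.
have hk1 : m k0 = 1%N.
  move: hk hs; case: (m k0) => [|[|n]] //=; lia.
have hrest : (\sum_(i < 12 | (col_of i == c) && (i != k0)) m i)%N = 0%N.
  apply/eqP; rewrite -(eqn_add2l (m k0)) addn0 hk1; apply/eqP; move: hs; rewrite hk1; exact.
have hc3 : (c < 3)%N := ltn_ord c.
have hdiv : (k0 %/ 3 < 4)%N.
  have := ltn_ord k0; lia.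
have hidx : idx (inord (k0 %/ 3)) c = k0.
  apply: ord_inj; rewrite val_idx // inordK //.
  move/eqP: hc; rewrite /col_of => <-; rewrite mulnC -divn_eq //.
exists (inord (k0 %/ 3)); rewrite hidx; split => // x hx hxk.
move/eqP: hrest; rewrite sum_nat_eq0 => /forallP /(_ x).
by rewrite hx eqxx hxk /= => /eqP.
Qed.

Lemma char111 (m : 'X_{1..12}) : (forall c : 'I_3, coldeg m c = 1%N) ->
  exists i j k, m = mono i j k.
Proof.
move=> h.
have [i [hi1 hi0]] := col1 (h (@Ordinal 3 0 isT)).
have [j [hj1 hj0]] := col1 (h (@Ordinal 3 1 isT)).
have [k [hk1 hk0]] := col1 (h (@Ordinal 3 2 isT)).
rewrite /= in hi1 hi0 hj1 hj0 hk1 hk0.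
exists i, j, k; apply/mnmP => x; rewrite /mono !mnmDE !mnm1E.
have := col_lt x; case hcx : (col_of x) => [|[|[|n]]] // _.
- rewrite (@idx_neq j 1) ?hcx // (@idx_neq k 2) ?hcx // !addn0.
  case: eqP => [<-|/eqP ne] //; by rewrite hi0 // eq_sym.
- rewrite (@idx_neq i 0) ?hcx // (@idx_neq k 2) ?hcx // addn0 add0n.
  case: eqP => [<-|/eqP ne] //; by rewrite hj0 // eq_sym.
- rewrite (@idx_neq i 0) ?hcx // (@idx_neq j 1) ?hcx // !add0n.
  case: eqP => [<-|/eqP ne] //; by rewrite hk0 // eq_sym.
Qed.

Lemma mono_eq i j k i0 j0 k0 :
  (mono i j k == mono i0 j0 k0) = [&& i == i0, j == j0 & k == k0].
Proof.
apply/eqP/idP => [e|/and3P [/eqP -> /eqP -> /eqP ->] //].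
have h0 := congr1 (fun m : 'X_{1..12} => m (idx i0 0)) e.
have h1 := congr1 (fun m : 'X_{1..12} => m (idx j0 1)) e.
have h2 := congr1 (fun m : 'X_{1..12} => m (idx k0 2)) e.
rewrite /mono /= !mnmDE !mnm1E !idx_inj //= !eqxx /= !andbF !andbT in h0 h1 h2.
move: h0 h1 h2; rewrite !addn0 ?add0n.
by case: (i == i0); case: (j == j0); case: (k == k0).
Qed.


Lemma sum3 (V : nmodType) (H : nat -> V) n :
  \sum_(0 <= k < 3 * n) H k = \sum_(0 <= i < n) (H (3 * i)%N + H (3 * i).+1 + H (3 * i).+2).
Proof.
elim: n => [|n IH]; first by rewrite muln0 !big_nil.
rewrite mulnS !addSn add0n !big_nat_recr //= IH; rewrite ?addrA //; lia.
Qed.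

Lemma sum12 (V : nmodType) (G : 'I_12 -> V) :
  \sum_k G k = \sum_(i < 4) (G (idx i 0) + G (idx i 1) + G (idx i 2)).
Proof.
have e1 : \sum_k G k = \sum_(0 <= k < 3 * 4) G (inord k).
  by rewrite big_mkord; apply: eq_bigr => k _; rewrite inord_val.
rewrite e1 sum3 big_mkord; apply: eq_bigr => i _.
by rewrite /idx addn0 addn1 addn2.
Qed.

Section Final.
Variable R : realType.
Local Notation F := (R[i]).
Local Notation SS := (S R).

Lemma REP1 (a : SS) : a \is 1.-homog ->
  a = \sum_(k < 12) a@_U_(k) *: 'X_[U_(k)].
Proof.
move=> ha; apply/mpolyP => m; rewrite (big_morph _ (mcoeffD m) (mcoeff0 _ m)).
under eq_bigr => k _ do rewrite mcoeffZ mcoeffX.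
case: (boolP (m \in msupp a)) => hm.
  have := dhomogP _ _ _ ha m hm => /eqP /mdeg1P [k0 /eqP ->].
  under eq_bigr => k _ do rewrite eq_mnm1.
  by rewrite sum_delta.
rewrite (memN_msupp_eq0 hm) big1 // => k _; case: eqP => [e|]; last by rewrite mulr0.
by rewrite e (memN_msupp_eq0 hm) mul0r.
Qed.

Lemma sum3_delta (G : 'I_4 -> 'I_4 -> 'I_4 -> F) i0 j0 k0 :
  \sum_i \sum_j \sum_k G i j k * ([&& i == i0, j == j0 & k == k0])%:R = G i0 j0 k0.
Proof.
rewrite (bigD1 i0) //= [X in _ + X]big1 ?addr0; last first.
  move=> i /negbTE hi; apply: big1 => j _; apply: big1 => k _; by rewrite hi mulr0.
rewrite eqxx (bigD1 j0) //= [X in _ + X]big1 ?addr0; last first.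
  move=> j /negbTE hj; apply: big1 => k _; by rewrite hj mulr0.
rewrite eqxx /=; exact: sum_delta.
Qed.

Lemma PolyT_coef T m : (PolyT T : SS)@_m =
  \sum_i \sum_j \sum_k T i j k * (mono i j k == m)%:R.
Proof.
rewrite /PolyT (big_morph _ (mcoeffD m) (mcoeff0 _ m)); apply: eq_bigr => i _.
rewrite (big_morph _ (mcoeffD m) (mcoeff0 _ m)); apply: eq_bigr => j _.
rewrite (big_morph _ (mcoeffD m) (mcoeff0 _ m)); apply: eq_bigr => k _.
by rewrite mcoeffZ mcoeffX.
Qed.

Lemma REP3 (D : SS) : colhomog_of deg111 D ->
  D = PolyT (fun i j k => D@_(mono i j k)).
Proof.
move=> hD; apply/mpolyP => m; rewrite PolyT_coef.
case: (boolP (m \in msupp D)) => hm.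
  have [i0 [j0 [k0 e]]] := char111 (hD m hm).
  rewrite e.
  have := sum3_delta (fun i j k => D@_(mono i j k)) i0 j0 k0 => /= <-.
  apply: eq_bigr => i _; apply: eq_bigr => j _; apply: eq_bigr => k _.
  by rewrite mono_eq.
rewrite (memN_msupp_eq0 hm) big1 // => i _; rewrite big1 // => j _; rewrite big1 // => k _.
case: eqP => [e|]; last by rewrite mulr0.
by rewrite e (memN_msupp_eq0 hm) mul0r.
Qed.

Lemma modiv3 (i : 'I_4) p : (p < 3)%N -> ((3 * i + p) %% 3 = p)%N /\ ((3 * i + p) %/ 3 = i)%N.
Proof.
move=> hp; rewrite mulnC modnMDl modn_small // divnMDl // divn_small // addn0 //.
Qed.

Definition xv (u v w : 'I_4 -> F) : 'I_12 -> F := fun k =>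
  if (k %% 3 == 0)%N then u (inord (k %/ 3)) else
  if (k %% 3 == 1)%N then v (inord (k %/ 3)) else w (inord (k %/ 3)).

Lemma xv0 u v w i : xv u v w (idx i 0) = u i.
Proof. by rewrite /xv val_idx //; have [-> ->] := @modiv3 i 0 isT; rewrite inord_val. Qed.
Lemma xv1 u v w i : xv u v w (idx i 1) = v i.
Proof. by rewrite /xv val_idx //; have [-> ->] := @modiv3 i 1 isT; rewrite inord_val. Qed.
Lemma xv2 u v w i : xv u v w (idx i 2) = w i.
Proof. by rewrite /xv val_idx //; have [-> ->] := @modiv3 i 2 isT; rewrite inord_val. Qed.

Lemma eval_PolyT T u v w : (PolyT T : SS).@[xv u v w] = Tf T u v w.
Proof.
rewrite /PolyT /Tf (big_morph _ (mevalD _) (meval0 _)); apply: eq_bigr => i _.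
rewrite (big_morph _ (mevalD _) (meval0 _)); apply: eq_bigr => j _.
rewrite (big_morph _ (mevalD _) (meval0 _)); apply: eq_bigr => k _.
rewrite mevalZ /mono !mpolyXD !mevalM !mevalXU xv0 xv1 xv2; ring.
Qed.

Lemma eval_lin (cf : 'I_12 -> F) x :
  (\sum_(k < 12) cf k *: ('X_[U_(k)] : SS)).@[x] = \sum_k cf k * x k.
Proof.
rewrite (big_morph _ (mevalD _) (meval0 _)); apply: eq_bigr => k _.
by rewrite mevalZ mevalXU.
Qed.

Lemma eval1 (a : SS) u v w : a \is 1.-homog ->
  a.@[xv u v w] = dot (fun i => a@_U_(idx i 0)) u + dot (fun i => a@_U_(idx i 1)) v
     + dot (fun i => a@_U_(idx i 2)) w.
Proof.
move=> ha; rewrite {1}(REP1 ha) eval_lin sum12 /dot -!big_split; apply: eq_bigr => i _.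
by rewrite xv0 xv1 xv2.
Qed.

Theorem lemma7p3_sec (Delta a b c d : S R) :
  colhomog_of deg111 Delta ->
  a \is 1.-homog -> c \is 1.-homog ->
  b \is 2.-homog -> d \is 2.-homog ->
  Delta = a * b + c * d ->
  exists a' b' c' d' : S R,
    [/\ colhomog a', colhomog b', colhomog c' & colhomog d'] /\
    [/\ a' \is 1.-homog, c' \is 1.-homog, b' \is 2.-homog & d' \is 2.-homog] /\
    Delta = a' * b' + c' * d'.
Proof.
move=> hD ha hc hb hd hE.
pose T := fun i j k => Delta@_(mono i j k).
have eD : Delta = PolyT T := REP3 hD.
have hyp : Hyp T (fun i => a@_U_(idx i 0)) (fun i => a@_U_(idx i 1)) (fun i => a@_U_(idx i 2))
                 (fun i => c@_U_(idx i 0)) (fun i => c@_U_(idx i 1)) (fun i => c@_U_(idx i 2)).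
  move=> u v w h1 h2.
  rewrite -eval_PolyT -eD hE mevalD !mevalM (eval1 _ _ _ ha) (eval1 _ _ _ hc) h1 h2.
  by rewrite !mul0r addr0.
have [p [q [f [g [f' [g' [hp hq HT]]]]]]] := tensor_main hyp.
exists (lin p f), (quad p g), (lin q f'), (quad q g').
split; first by split; [exact: lin_colhomog | exact: quad_colhomog | exact: lin_colhomog | exact: quad_colhomog].
split; first by split; [exact: lin_homog | exact: lin_homog | exact: quad_homog | exact: quad_homog].
by rewrite eD (PolyT_ext HT) PolyT_add !lin_quad.
Qed.

End Final.


Theorem lemma7p3 (R : realType) (Delta a b c d : S R) :
  colhomog_of deg111 Delta ->
  a \is 1.-homog -> c \is 1.-homog ->
  b \is 2.-homog -> d \is 2.-homog ->
  Delta = a * b + c * d ->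
  exists a' b' c' d' : S R,
    [/\ colhomog a', colhomog b', colhomog c' & colhomog d'] /\
    [/\ a' \is 1.-homog, c' \is 1.-homog, b' \is 2.-homog & d' \is 2.-homog] /\
    Delta = a' * b' + c' * d'.
Proof. exact: lemma7p3_sec. Qed.
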